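(* Let $m,n>0$, let $f$ and $g$ be concave positive real functions on $[0,m]$ and $[0,n]$ respectively, and let $A=\{(x,y): 0\le x\le m,\ 0\le y\le f(x)\}$ and $B=\{(x,y): 0\le x\le n,\ 0\le y\le g(x)\}$. If $C=m\left(\frac{|A|}{m^2}-\frac{|B|}{n^2}\right)\ge 0$ and $f(x)=\frac{m}{n}g(\frac{n}{m}x)+C$ for all $x\in[0,m]$, then $$|A+B|=\left(\frac{|A|}{m}+\frac{|B|}{n}\right)(m+n).$$
   Context: $|X|$ denotes area; $A+B$ is the Minkowski sum. *)

(* Defs.v *)
From HB Require Import structures.
From mathcomp Require Import all_boot all_order all_algebra.
From mathcomp Require Import all_classical all_reals all_analysis.
Set Implicit Arguments. Unset Strict Implicit. Unset Printing Implicit Defensive.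
Import Order.TTheory GRing.Theory Num.Theory.
Local Open Scope classical_set_scope.
Local Open Scope ring_scope.

Definition concave_on (R : realType) (a b : R) (f : R -> R) : Prop :=
  forall x y t : R, a <= x <= b -> a <= y <= b -> 0 <= t <= 1 ->
    (1 - t) * f x + t * f y <= f ((1 - t) * x + t * y).

Definition subgraph (R : realType) (m : R) (f : R -> R) : set (R * R) :=
  [set p | 0 <= p.1 <= m /\ 0 <= p.2 <= f p.1].

Definition minkowski_sum (R : realType) (A B : set (R * R)) : set (R * R) :=
  [set p | exists a b, A a /\ B b /\ p = (a.1 + b.1, a.2 + b.2)].

Definition area (R : realType) (X : set (R * R)) : \bar R :=
  ((@lebesgue_measure R) \x (@lebesgue_measure R))%E X.

(* Main.v *)
Require Import Defs.
From HB Require Import structures.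
From mathcomp Require Import all_boot all_order all_algebra.
From mathcomp Require Import all_classical all_reals all_analysis.
From mathcomp Require Import ring lra measurable_realfun.
Import Order.TTheory GRing.Theory Num.Theory.
Local Open Scope classical_set_scope.
Local Open Scope ring_scope.

Section S.
Variable R : realType.
Local Notation mu := (@lebesgue_measure R).

Lemma concave_measurable (n : R) (g : R -> R) :
  concave_on 0 n g -> measurable_fun `[0, n] g.
Proof.
move=> cg mD; apply: (measurability _ (RGenOInfty.measurableE R)) => //.
move=> _ [_ [a ->] <-]; apply: is_interval_measurable.
move=> x y [/= xD gx] [/= yD gy] z /andP[xz zy].
move: xD yD; rewrite !in_itv/= => /andP[x0 xn] /andP[y0 yn].
move: gx gy; rewrite /preimage/= !in_itv/= !andbT => gx gy.
split; first by apply/andP; split; lra.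
have [exy|nxy] := eqVneq x y.
  by have -> : z = x by subst y; apply/eqP; rewrite eq_le xz zy.
have xy : x < y by rewrite lt_neqAle nxy (le_trans xz zy).
pose t := (z - x) / (y - x).
have yx0 : 0 < y - x by lra.
have t0 : 0 <= t by rewrite divr_ge0 //; lra.
have t1 : t <= 1 by rewrite ler_pdivrMr //; lra.
have zE : z = (1 - t) * x + t * y.
  rewrite /t; field; lra.
have := cg x y t; rewrite -zE => H.
have {H} H := H ltac:(apply/andP; lra) ltac:(apply/andP; lra) ltac:(apply/andP; lra).
apply: lt_le_trans H.
have [t1'|t1'] := ltP t 1.
  have : 0 < (1 - t) * (g x - a) by apply: mulr_gt0; lra.
  have : 0 <= t * (g y - a) by apply: mulr_ge0; lra.
  lra.
have -> : t = 1 by lra.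
lra.
Qed.

Lemma push_scale (k : R) (k0 : 0 < k) (A : set R) : measurable A ->
  pushforward mu (fun x : R => x / k) A = (k%:E * mu A)%E.
Proof.
move=> mA.
pose phi := (fun x : R => x / k) : R -> measurableTypeR R.
have mphi : measurable_fun [set: R] phi by exact: measurable_realfun.mulrr_measurable.
have kV : 0 <= k^-1 by rewrite invr_ge0 ltW.
pose r : {nonneg R} := @NngNum _ k^-1 kV.
pose P := measure_function_pushforward__canonical__measure_function_Measure mu mphi.
have := @lebesgue_measure_unique R (measure_function_mscale__canonical__measure_function_Measure r P) _ A mA.
move=> H; rewrite H; last first.
  move=> _ [[a b] _ <-] /=.
  rewrite /mscale /= /pushforward.
  have -> : phi @^-1` `]a, b]%classic = `]a * k, b * k]%classic.
    apply/seteqP; split => x; rewrite /phi /= !in_itv /=.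
      by rewrite ler_pdivrMr // ltr_pdivlMr.
    by rewrite ler_pdivrMr // ltr_pdivlMr.
  rewrite !lebesgue_measure_itv /= !lte_fin ltr_pM2r //.
  case: ifPn => ab; last by rewrite mule0.
  by rewrite -!EFinB -EFinM; congr EFin; field; rewrite gt_eqF.
by rewrite /mscale /= muleA -EFinM mulfV ?mul1e // gt_eqF.
Qed.

Lemma scale_integral (k n : R) (g : R -> R) : 0 < k ->
  (forall x, 0 <= x <= n -> 0 <= g x) -> measurable_fun `[0%R, n] g ->
  (\int[mu]_(x in `[0%R, (k * n)%R]) (g (x / k)%R)%:E =
   k%:E * \int[mu]_(x in `[0%R, n]) (g x)%:E)%E.
Proof.
move=> k0 g0 mg.
pose phi := (fun x : R => x / k) : measurableTypeR R -> measurableTypeR R.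
have mphi : measurable_fun [set: R] phi by exact: measurable_realfun.mulrr_measurable.
have -> : `[0%R, k * n]%classic = phi @^-1` `[0%R, n]%classic.
  apply/seteqP; split => x; rewrite /phi /= !in_itv /=.
    case/andP => x0 xn; apply/andP; split.
      by rewrite divr_ge0 // ltW.
    by rewrite ler_pdivrMr // mulrC.
  case/andP => x0 xn; apply/andP; split.
    by move: x0; rewrite pmulr_lge0 // invr_gt0.
  by move: xn; rewrite ler_pdivrMr // mulrC.
have := @ge0_integral_pushforward _ _ _ _ R phi mphi mu `[0%R, n] (fun y => (g y)%:E).
move=> <- //; last 2 first.
- exact/measurable_EFinP.
- by move=> y; rewrite inE /= in_itv /= => /g0; rewrite lee_fin.
have kge0 : 0 <= k by exact: ltW.
rewrite (@eq_measure_integral _ _ _ _ (mscale (@NngNum _ k kge0) mu)); last first.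
  move=> A mA _; exact: push_scale.
rewrite ge0_integral_mscale //.
exact/measurable_EFinP.
Qed.

Lemma area_subgraph (L : R) (h : R -> R) :
  (forall x, 0 <= x <= L -> 0 <= h x) ->
  area (subgraph L h) = (\int[mu]_(x in `[0%R, L]) (h x)%:E)%E.
Proof.
move=> h0; rewrite /area /product_measure1 [RHS]integral_mkcond.
apply: eq_integral => x _ /=; rewrite /patch.
case: ifPn => [|xL].
  rewrite inE /= in_itv/= => xL.
  rewrite (_ : xsection _ _ = `[0, h x]%classic); last first.
    apply/seteqP; split => y; rewrite /xsection /= inE /subgraph /= in_itv /=.
      by case=> _ /andP[-> ->].
    by move=> /andP[-> ->]; split.
  rewrite lebesgue_measure_itv /= lte_fin.
  have := h0 x xL; rewrite le_eqVlt => /orP[/eqP <-|->]; first by rewrite ltxx.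
  by rewrite sube0.
rewrite (_ : xsection _ _ = set0) ?measure0 //.
apply/seteqP; split => y //; rewrite /xsection /= inE /subgraph /= => -[xL' _].
by move: xL; rewrite notin_setE /= in_itv /= xL'.
Qed.

Lemma area_scaled (k n c : R) (g : R -> R) : 0 < k -> 0 <= n -> 0 <= c ->
  (forall x, 0 <= x <= n -> 0 <= g x) -> measurable_fun `[0%R, n] g ->
  area (subgraph (k * n) (fun x => k * g (x / k) + c)) =
  ((k ^+ 2)%:E * \int[mu]_(x in `[0%R, n]) (g x)%:E + (c * (k * n))%:E)%E.
Proof.
move=> k0 n0 c0 g0 mg.
have phiD x : 0 <= x <= k * n -> 0 <= x / k <= n.
  case/andP => x0 xn; apply/andP; split; first by rewrite divr_ge0 // ltW.
  by rewrite ler_pdivrMr // mulrC.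
rewrite area_subgraph; last first.
  move=> x /phiD /g0 gx; apply: addr_ge0 => //; exact: mulr_ge0 (ltW k0) gx.
have mphi : measurable_fun `[0%R, k * n] (fun x : R => g (x / k)).
  apply: (@measurable_comp _ _ _ _ _ _ `[0%R, n]%classic) => //.
  - by move=> _ [x /= xD <-]; apply: phiD; move: xD; rewrite in_itv.
  - exact: mulrr_measurable.
under eq_integral do rewrite EFinD EFinM.
rewrite ge0_integralD //; last 2 first.
- move=> x; rewrite /= in_itv /= => /phiD /g0 gx; rewrite -EFinM lee_fin; exact: mulr_ge0 (ltW k0) gx.
- apply: emeasurable_funM => //; exact/measurable_EFinP.
rewrite ge0_integralZl //; last 3 first.
- exact/measurable_EFinP.
- by move=> x; rewrite /= in_itv /= => /phiD /g0 gx; rewrite lee_fin.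
- by rewrite lee_fin ltW.
rewrite scale_integral // integral_cst //.
rewrite [X in (c%:E * X)%E](_ : _ = (k * n)%:E); last first.
  apply: eq_trans (@lebesgue_measure_itv R `[0%R, (k * n)%R]) _.
  rewrite /= lte_fin.
  have := mulr_ge0 (ltW k0) n0; rewrite le_eqVlt => /orP[/eqP <-|->].
    by rewrite ltxx.
  by rewrite sube0.
by rewrite muleA -!EFinM expr2.
Qed.

Lemma int_fin (n : R) (g : R -> R) : 0 < n -> concave_on 0 n g ->
  (forall x, 0 <= x <= n -> 0 < g x) ->
  (\int[mu]_(x in `[0%R, n]) (g x)%:E)%E \is a fin_num.
Proof.
move=> n0 cg g0.
have bnd x : 0 <= x <= n -> g x <= 2 * g (n / 2).
  move=> /andP[x0 xn].
  have H := cg x (n - x) (1/2) ltac:(apply/andP; lra) ltac:(apply/andP; lra) ltac:(apply/andP; lra).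
  rewrite (_ : (1 - 1/2) * x + 1/2 * (n - x) = n / 2) in H; last by field.
  have : 0 < g (n - x) by apply: g0; apply/andP; lra.
  lra.
have mg := @concave_measurable n g cg.
rewrite ge0_fin_numE; last by apply: integral_ge0 => x; rewrite /= in_itv /= => /g0 /ltW; rewrite lee_fin.
apply: (@le_lt_trans _ _ (\int[mu]_(x in `[0%R, n]) (cst (2 * g (n / 2))%:E) x)%E).
  apply: ge0_le_integral => //.
  - by move=> x; rewrite /= in_itv /= => /g0 /ltW; rewrite lee_fin.
  - exact/measurable_EFinP.
have := @integral_cst _ _ R mu `[0%R, n] ltac:(by []) (2 * g (n / 2))%:E.
move=> ->.
rewrite [X in (_ * X)%E](_ : _ = n%:E); last first.
  apply: eq_trans (@lebesgue_measure_itv R `[0%R, n]) _.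
  by rewrite /= lte_fin n0 sube0.
by rewrite -EFinM ltry.
Qed.

Lemma eq_subgraph (L : R) (h1 h2 : R -> R) :
  (forall x, 0 <= x <= L -> h1 x = h2 x) -> subgraph L h1 = subgraph L h2.
Proof.
move=> e; apply/seteqP; split => -[x y] /= [xL yh]; split => //.
  by rewrite -e.
by rewrite e.
Qed.

Lemma mink_eq (m n C : R) (g : R -> R) : 0 < m -> 0 < n -> 0 <= C ->
  concave_on 0 n g -> (forall x, 0 <= x <= n -> 0 < g x) ->
  minkowski_sum (subgraph m (fun x => m / n * g (x / (m / n)) + C)) (subgraph n g) =
  subgraph ((1 + m / n) * n) (fun x => (1 + m / n) * g (x / (1 + m / n)) + C).
Proof.
move=> m0 n0 C0 cg g0.
have l0 : 0 < m / n by rewrite divr_gt0.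
have ln : m / n * n = m by rewrite mulfVK // gt_eqF.
move: l0 ln; set l := m / n => l0 ln.
have l1 : 0 < 1 + l by lra.
apply/seteqP; split.
- move=> _ [[a1 a2] [[b1 b2] [/= [/andP[a10 a1m] /andP[a20 a2f]] [/= [/andP[b10 b1n] /andP[b20 b2g]] ->]]]].
  move: a10 a1m a20 a2f b10 b1n b20 b2g => /= a10 a1m a20 a2f b10 b1n b20 b2g.
  rewrite /subgraph /= mulrDl mul1r ln; split.
    by apply/andP; split; lra.
  apply/andP; split; first lra.
  pose u := a1 / l; pose t := 1 / (1 + l).
  have u0 : 0 <= u <= n.
    apply/andP; split; first by rewrite divr_ge0 // ltW.
    by rewrite ler_pdivrMr // mulrC; lra.
  have t01 : 0 <= t <= 1.
    apply/andP; split; first by rewrite divr_ge0 // ltW.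
    by rewrite ler_pdivrMr //; lra.
  have H := cg u b1 t u0 ltac:(apply/andP; lra) t01.
  rewrite (_ : (1 - t) * u + t * b1 = (a1 + b1) / (1 + l)) in H; last first.
    by rewrite /u /t; field; apply/andP; split; rewrite gt_eqF.
  have H2 := ler_wpM2l (ltW l1) H.
  have e1 : (1 + l) * (1 - t) = l by rewrite /t; field; rewrite gt_eqF.
  have e2 : (1 + l) * t = 1 by rewrite /t; field; rewrite gt_eqF.
  rewrite mulrDr [X in X + _ <= _]mulrA [X in _ + X <= _]mulrA e1 e2 mul1r in H2.
  have : a1 / l = u by [].
  move: a2f; rewrite -/u => a2f.
  lra.
- move=> [x y] /= [/andP[x0 xL] /andP[y0 yh]].
  pose s := x / (1 + l).
  have s0 : 0 <= s <= n.
    apply/andP; split; first by rewrite divr_ge0 // ltW.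
    by rewrite ler_pdivrMr // mulrC.
  have ls : l * s / l = s by rewrite [l * s]mulrC mulfK // gt_eqF.
  have xE : x = l * s + s by rewrite /s; field; rewrite gt_eqF.
  have gs : 0 < g s by exact: g0.
  have ls0 : 0 <= l * s <= m.
    case/andP: s0 => s0 sn; apply/andP; split; first by rewrite mulr_ge0 // ltW.
    by rewrite -ln ler_pM2l.
  have [yg|yg] := leP y (g s).
    exists (l * s, 0), (s, y); split; [|split].
    + rewrite /subgraph /= ls; split => //; apply/andP; split => //.
      by rewrite addr_ge0 // mulr_ge0 // ltW.
    + by rewrite /subgraph /=; split => //; apply/andP.
    + by rewrite /= add0r -xE.
  exists (l * s, y - g s), (s, g s); split; [|split].
  + rewrite /subgraph /= ls; split => //; apply/andP; split; first lra.
    move: yh; rewrite -/s /= mulrDl mul1r; lra.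
  + by rewrite /subgraph /=; split => //; apply/andP; split => //; apply: ltW.
  + by rewrite /= subrK -xE.
Qed.
End S.

Theorem lemma4p4 (R : realType) (m n : R) (f g : R -> R) :
  0 < m -> 0 < n ->
  concave_on 0 m f -> concave_on 0 n g ->
  (forall x, 0 <= x <= m -> 0 < f x) ->
  (forall x, 0 <= x <= n -> 0 < g x) ->
  let A := subgraph m f in
  let B := subgraph n g in
  let C := m * (fine (area A) / m ^+ 2 - fine (area B) / n ^+ 2) in
  0 <= C ->
  (forall x, 0 <= x <= m -> f x = m / n * g (n / m * x) + C) ->
  area (minkowski_sum A B) =
    ((fine (area A) / m + fine (area B) / n) * (m + n))%:E.
Proof.
move=> m0 n0 cf cg fpos gpos A B C C0 fE.
have g0 x : 0 <= x <= n -> 0 <= g x by move/gpos/ltW.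
have mg := @concave_measurable R n g cg.
have Ifin := @int_fin R n g n0 cg gpos.
have [Ir IE] : exists Ir, (\int[@lebesgue_measure R]_(x in `[0%R, n]) (g x)%:E)%E = Ir%:E.
  by exists (fine (\int[@lebesgue_measure R]_(x in `[0%R, n]) (g x)%:E)%E); rewrite fineK.
have l0 : 0 < m / n by rewrite divr_gt0.
have ln : m / n * n = m by rewrite mulfVK // gt_eqF.
have Aeq : A = subgraph m (fun x => m / n * g (x / (m / n)) + C).
  rewrite /A; apply: eq_subgraph => x xm; rewrite fE //; congr (_ * g _ + _).
  by field; apply/andP; split; rewrite gt_eqF.
have hA : area A = ((m / n) ^+ 2 * Ir + C * (m / n * n))%:E.
  rewrite Aeq.
  rewrite -[X in subgraph X _]ln area_scaled ?IE //; exact: ltW.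
have hB : area B = (1 ^+ 2 * Ir + 0 * (1 * n))%:E.
  have -> : B = subgraph (1 * n) (fun x => 1 * g (x / 1) + 0).
    by rewrite mul1r /B; apply: eq_subgraph => x _; rewrite mul1r divr1 addr0.
  by rewrite area_scaled ?IE // ltW.
have hS : area (minkowski_sum A B) =
    ((1 + m / n) ^+ 2 * Ir + C * ((1 + m / n) * n))%:E.
  rewrite {1}Aeq /B mink_eq // area_scaled ?IE //; try exact: ltW.
  by rewrite addr_gt0.
rewrite hS hA hB /=; congr EFin.
field; apply/andP; split; rewrite gt_eqF //.
Qed.
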